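(* Let $R$ be a commutative ring and $M$ an $R$-module. The following are equivalent: (1) $M$ is $w$-split. (2) $\mathrm{Ext}^1_R(M,N)$ is GV-torsion for all $R$-modules $N$. (3) $\mathrm{Ext}^i_R(M,N)$ is GV-torsion for all $R$-modules $N$ and all integers $i\ge 1$. (4) For every $R$-epimorphism $g:B\to C$, the induced map $g_*:\mathrm{Hom}_R(M,B)\to\mathrm{Hom}_R(M,C)$ has GV-torsion cokernel. (5) For every $R$-epimorphism $g':F\to M$ with $F$ projective, the induced map $g'_*:\mathrm{Hom}_R(M,F)\to\mathrm{Hom}_R(M,M)$ has GV-torsion cokernel. (6) For every $R$-epimorphism $g:B\to C$ and every homomorphism $\alpha:M\to C$, there exist $J=\langle d_1,\dots,d_n\rangle\in\mathrm{GV}(R)$ and homomorphisms $h_k:M\to B$ with $gh_k=d_k\alpha$ for $k=1,\dots,n$. (7) Every exact sequence $0\to A\to B\to M\to 0$ of $R$-modules is $w$-split. (8) There exist elements $\{x_i\}_{i\in I}$ of $M$ and $J=\langle d_1,\dots,d_n\rangle\in\mathrm{GV}(R)$ with the following property. For each $k=1,\dots,n$ there are homomorphisms $\{f_{k_i}\}_{i\in I}\subseteq M^*=\mathrm{Hom}_R(M,R)$ such that for each $x\in M$, $f_{k_i}(x)=0$ for almost all $i$, and $d_kx=\sum_i f_{k_i}(x)x_i$.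
   Context: $R$ is a commutative ring with identity. For an $R$-module $M$ and $s\in R$, $\eta^M_s:M\to M$ is multiplication by $s$. An ideal $J$ of $R$ is a GV-ideal if $J$ is finitely generated and the natural map $R\to\mathrm{Hom}_R(J,R)$ is an isomorphism; $\mathrm{GV}(R)$ is the set of GV-ideals. $\mathrm{tor_{GV}}(M)=\{x\in M: Jx=0\text{ for some }J\in\mathrm{GV}(R)\}$, and $M$ is GV-torsion if $\mathrm{tor_{GV}}(M)=M$. A short exact sequence $0\to A\xrightarrow{f}B\xrightarrow{g}C\to 0$ is $w$-split if there exist $J=\langle d_1,\dots,d_n\rangle\in\mathrm{GV}(R)$ and $h_1,\dots,h_n\in\mathrm{Hom}_R(C,B)$ with $gh_k=\eta^C_{d_k}$ for all $k$. A module $M$ is $w$-split if there is a $w$-split exact sequence $0\to K\to P\to M\to 0$ with $P$ projective. *)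

(* Defs.v *)
From HB Require Import structures.
From mathcomp Require Import all_boot all_order all_algebra.
Set Implicit Arguments. Unset Strict Implicit. Unset Printing Implicit Defensive.
Import GRing.Theory.
Local Open Scope ring_scope.

Definition surjective (A B : Type) (g : A -> B) : Prop :=
  forall y : B, exists x : A, g x = y.

Section GV.
Variable R : comPzRingType.

Definition in_ideal (n : nat) (d : 'I_n -> R) (x : R) : Prop :=
  exists c : 'I_n -> R, x = \sum_(k < n) c k * d k.

(** R-linear maps J -> R, J viewed as an R-submodule of R. *)
Definition ideal_hom (n : nat) (d : 'I_n -> R) (f : R -> R) : Prop :=
  forall (a x y : R), in_ideal d x -> in_ideal d y ->
    f (a * x + y) = a * f x + f y.

(** J = <d_1..d_n> is a GV-ideal: it is finitely generated (by d) and the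
    natural map R -> Hom_R(J,R), r |-> (x |-> r x), is bijective. *)
Definition is_GV (n : nat) (d : 'I_n -> R) : Prop :=
  (forall r : R, (forall x, in_ideal d x -> r * x = 0) -> r = 0) /\
  (forall f : R -> R, ideal_hom d f ->
     exists r : R, forall x, in_ideal d x -> f x = r * x).

Definition GV_torsion_elt (M : lmodType R) (x : M) : Prop :=
  exists (n : nat) (d : 'I_n -> R), is_GV d /\
    forall j, in_ideal d j -> j *: x = 0.

Definition GV_torsion_module (M : lmodType R) : Prop :=
  forall x : M, GV_torsion_elt x.

Definition projective (P : lmodType R) : Prop :=
  forall (B C : lmodType R) (g : {linear B -> C}), surjective g ->
  forall f : {linear P -> C}, exists h : {linear P -> B},
    forall x, g (h x) = f x.

Definition short_exact (A B C : lmodType R)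
  (f : {linear A -> B}) (g : {linear B -> C}) : Prop :=
  injective f /\ surjective g /\
  (forall y : B, g y = 0 <-> exists x : A, f x = y).

Definition w_split_seq (B C : lmodType R) (g : {linear B -> C}) : Prop :=
  exists (n : nat) (d : 'I_n -> R) (h : 'I_n -> {linear C -> B}),
    is_GV d /\ forall k x, g (h k x) = d k *: x.

Definition w_split_module (M : lmodType R) : Prop :=
  exists (K P : lmodType R) (f : {linear K -> P}) (g : {linear P -> M}),
    projective P /\ short_exact f g /\ w_split_seq g.

(** Cokernel of g_* : Hom_R(M,B) -> Hom_R(M,C) is GV-torsion (unfolded:
    every element alpha of Hom_R(M,C) is killed modulo the image of g_*
    by a GV-ideal). *)
Definition coker_postcomp_GV_torsion (M B C : lmodType R)
  (g : {linear B -> C}) : Prop :=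
  forall alpha : {linear M -> C},
    exists (n : nat) (d : 'I_n -> R), is_GV d /\
      forall j, in_ideal d j ->
        exists h : {linear M -> B}, forall x, g (h x) = j *: alpha x.

(** A projective resolution ... -> P 2 -d 1-> P 1 -d 0-> P 0 -e-> M -> 0. *)
Record proj_resolution (M : lmodType R) := ProjResolution {
  pr_mod : nat -> lmodType R;
  pr_d : forall i, {linear pr_mod i.+1 -> pr_mod i};
  pr_e : {linear pr_mod 0 -> M};
  pr_proj : forall i, projective (pr_mod i);
  pr_e_surj : surjective pr_e;
  pr_exact0 : forall y, pr_e y = 0 <-> exists x, pr_d 0 x = y;
  pr_exact : forall i y, pr_d i y = 0 <-> exists x, pr_d i.+1 x = y
}.

(** Ext^(j+1)_R(M,N) is GV-torsion, computed as the cohomology of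
    Hom_R(P_*, N) for (any) projective resolution P_* of M: every
    (j+1)-cocycle phi : P_(j+1) -> N (phi o d_(j+1) = 0) is, after
    multiplication by every element of some GV-ideal, a coboundary
    psi o d_j. *)
Definition Ext_GV_torsion (j : nat) (M N : lmodType R) : Prop :=
  forall P : proj_resolution M,
  forall phi : {linear pr_mod P j.+1 -> N},
    (forall x, phi (pr_d P j.+1 x) = 0) ->
    exists (n : nat) (d : 'I_n -> R), is_GV d /\
      forall r, in_ideal d r ->
        exists psi : {linear pr_mod P j -> N},
          forall x, r *: phi x = psi (pr_d P j x).

End GV.

(* Main.v *)
Require Import Defs.
From HB Require Import structures.
From mathcomp Require Import all_boot all_order all_algebra.
From mathcomp Require Import boolp.
Set Implicit Arguments. Unset Strict Implicit. Unset Printing Implicit Defensive.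
Import GRing.Theory.
Local Open Scope ring_scope.


Definition mklin (R : pzRingType) (U V : lmodType R) (f : U -> V)
  (H : forall a x y, f (a *: x + y) = a *: f x + f y) : {linear U -> V} :=
  HB.pack f (GRing.isLinear.Build R U V *:%R f H).

Lemma mklinE (R : pzRingType) (U V : lmodType R) f H x : @mklin R U V f H x = f x.
Proof. by []. Qed.

Section Free.
Variables (R : comPzRingType) (X : eqType).

Definition fsupp (f : X -> R) := exists s : seq X, forall x, x \notin s -> f x = 0.
Definition fmod := {f : X -> R | fsupp f}.
HB.instance Definition _ := gen_eqMixin fmod.
HB.instance Definition _ := gen_choiceMixin fmod.

Lemma feq (p q : fmod) : (forall x, sval p x = sval q x) -> p = q.
Proof.
case: p q => [f pf] [g pg] /= /funext E; subst; congr exist; exact: Prop_irrelevance.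
Qed.

Lemma fsupp0 : fsupp (fun _ => 0).
Proof. by exists [::]. Qed.
Lemma fsuppD (f g : X -> R) : fsupp f -> fsupp g -> fsupp (fun x => f x + g x).
Proof.
move=> [s1 H1] [s2 H2]; exists (s1 ++ s2) => x; rewrite mem_cat negb_or => /andP[a b].
by rewrite H1 // H2 // addr0.
Qed.
Lemma fsuppN (f : X -> R) : fsupp f -> fsupp (fun x => - f x).
Proof. by move=> [s H]; exists s => x /H ->; rewrite oppr0. Qed.
Lemma fsuppZ a (f : X -> R) : fsupp f -> fsupp (fun x => a * f x).
Proof. by move=> [s H]; exists s => x /H ->; rewrite mulr0. Qed.

Definition fzero : fmod := exist _ _ fsupp0.
Definition fadd (p q : fmod) : fmod := exist _ _ (fsuppD (proj2_sig p) (proj2_sig q)).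
Definition fopp (p : fmod) : fmod := exist _ _ (fsuppN (proj2_sig p)).
Definition fscale a (p : fmod) : fmod := exist _ _ (fsuppZ a (proj2_sig p)).

Lemma faddA : associative fadd.
Proof. by move=> p q r; apply: feq => x /=; rewrite addrA. Qed.
Lemma faddC : commutative fadd.
Proof. by move=> p q; apply: feq => x /=; rewrite addrC. Qed.
Lemma fadd0 : left_id fzero fadd.
Proof. by move=> p; apply: feq => x /=; rewrite add0r. Qed.
Lemma faddN : left_inverse fzero fopp fadd.
Proof. by move=> p; apply: feq => x /=; rewrite addNr. Qed.
HB.instance Definition _ := GRing.isZmodule.Build fmod faddA faddC fadd0 faddN.

Lemma fscaleA a b v : fscale a (fscale b v) = fscale (a * b) v.
Proof. by apply: feq => x /=; rewrite mulrA. Qed.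
Lemma fscale1 : left_id 1 fscale.
Proof. by move=> p; apply: feq => x /=; rewrite mul1r. Qed.
Lemma fscaleDr : right_distributive fscale +%R.
Proof. by move=> a p q; apply: feq => x /=; rewrite mulrDr. Qed.
Lemma fscaleDl v : {morph fscale^~ v: a b / a + b}.
Proof. by move=> a b; apply: feq => x /=; rewrite mulrDl. Qed.
HB.instance Definition _ := GRing.Zmodule_isLmodule.Build R fmod fscaleA fscale1 fscaleDr fscaleDl.

Lemma fvalD (p q : fmod) x : sval (p + q) x = sval p x + sval q x. Proof. by []. Qed.
Lemma fvalZ a (p : fmod) x : sval (a *: p) x = a * sval p x. Proof. by []. Qed.
Lemma fval0 x : sval (0 : fmod) x = 0. Proof. by []. Qed.

End Free.


Section Free2.
Variables (R : comPzRingType) (X : eqType).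
Local Notation fmod := (fmod R X).

Definition supp (p : fmod) : seq X :=
  [seq x <- undup (sval (cid (proj2_sig p))) | sval p x != 0].

Lemma supp_uniq p : uniq (supp p).
Proof. by rewrite filter_uniq // undup_uniq. Qed.

Lemma mem_supp p x : (x \in supp p) = (sval p x != 0).
Proof.
rewrite mem_filter mem_undup; case: (cid _) => s /= Hs.
case E: (sval p x != 0) => //=; apply/negPn/negP => /Hs; move/eqP: E; done.
Qed.

Lemma sum_over (V : zmodType) (p : fmod) (F : X -> V) (s : seq X) :
  uniq s -> (forall x, sval p x != 0 -> x \in s) ->
  (forall x, sval p x = 0 -> F x = 0) ->
  \sum_(i <- s) F i = \sum_(i <- supp p) F i.
Proof.
move=> us Hs HF.
rewrite (bigID (fun i => sval p i == 0)) /= big1 ?add0r; last first.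
  by move=> i /eqP; exact: HF.
rewrite -big_filter; apply: perm_big; apply: uniq_perm.
- exact: filter_uniq.
- exact: supp_uniq.
move=> x; rewrite mem_filter mem_supp; case E: (sval p x != 0) => //=.
exact: Hs.
Qed.

Definition flift (V : lmodType R) (v : X -> V) (p : fmod) : V :=
  \sum_(i <- supp p) sval p i *: v i.

Lemma flift_over (V : lmodType R) (v : X -> V) (p : fmod) s :
  uniq s -> (forall x, sval p x != 0 -> x \in s) ->
  flift v p = \sum_(i <- s) sval p i *: v i.
Proof. by move=> us Hs; rewrite (sum_over us Hs) // => x ->; rewrite scale0r. Qed.

Lemma flift_lin (V : lmodType R) (v : X -> V) a p q :
  flift v (a *: p + q) = a *: flift v p + flift v q.
Proof.
set s := undup (supp p ++ supp q).
have us : uniq s by rewrite undup_uniq.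
have Hp x : sval p x != 0 -> x \in s by rewrite mem_undup mem_cat -mem_supp => ->.
have Hq x : sval q x != 0 -> x \in s by rewrite mem_undup mem_cat -(mem_supp q) orbC => ->.
rewrite (flift_over v us Hp) (flift_over v us Hq) (flift_over (p := a *: p + q) v us); last first.
  move=> x /=; case: (eqVneq (sval p x) 0) => [->|/Hp //].
  by rewrite mulr0 add0r => /Hq.
rewrite scaler_sumr -big_split /=; apply: eq_bigr => i _.
by rewrite /= scalerDl scalerA.
Qed.

Definition fliftL (V : lmodType R) (v : X -> V) : {linear fmod -> V} :=
  mklin (@flift_lin V v).

Definition fdelta (y : X) : fmod.
Proof.
exists (fun x => if x == y then 1 else 0); rewrite /fsupp; exists [:: y] => x.
by rewrite inE => /negbTE ->.
Defined.

Lemma fdeltaE y x : sval (fdelta y) x = if x == y then 1 else 0.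
Proof. by []. Qed.

Lemma flift_delta (V : lmodType R) (v : X -> V) y : flift v (fdelta y) = v y.
Proof.
have H : forall x, sval (fdelta y) x != 0 -> x \in [:: y].
  by move=> x; rewrite fdeltaE inE; case: (x == y) => //; rewrite eqxx.
by rewrite (@flift_over V v (fdelta y) [:: y]) // big_seq1 fdeltaE eqxx scale1r.
Qed.

Lemma fval_sum (I : Type) (r : seq I) (F : I -> fmod) x :
  sval (\sum_(i <- r) F i) x = \sum_(i <- r) sval (F i) x.
Proof.
elim: r => [|a r IH]; first by rewrite !big_nil.
by rewrite !big_cons fvalD IH.
Qed.

Lemma fdecomp (p : fmod) : p = flift fdelta p.
Proof.
apply: feq => x; rewrite /flift fval_sum.
under eq_bigr => i _ do rewrite fvalZ fdeltaE.
case: (eqVneq (sval p x) 0) => [E|Nx].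
  rewrite E big1 // => i _; case: eqP => [<-|_]; by rewrite ?E ?mulr0 ?mul0r.
rewrite (bigD1_seq x) ?supp_uniq ?mem_supp //= eqxx mulr1 big1 ?addr0 //.
by move=> i /negbTE; rewrite eq_sym => ->; rewrite mulr0.
Qed.

Lemma lin_flift (V : lmodType R) (f : {linear fmod -> V}) p :
  f p = flift (fun i => f (fdelta i)) p.
Proof.
rewrite {1}(fdecomp p) /flift linear_sum; apply: eq_bigr => i _.
by rewrite linearZ.
Qed.

Lemma flift_comp (V W : lmodType R) (g : {linear V -> W}) (v : X -> V) p :
  g (flift v p) = flift (fun i => g (v i)) p.
Proof. by rewrite /flift linear_sum; apply: eq_bigr => i _; rewrite linearZ. Qed.

Lemma free_proj : projective fmod.
Proof.
move=> B C g sg f.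
pose b x := sval (cid (sg (f (fdelta x)))).
exists (fliftL b) => p; rewrite /= flift_comp (lin_flift f p).
congr flift; apply: funext => x; rewrite /b; case: cid => //.
Qed.

End Free2.

Section Lift.
Variable R : comPzRingType.

Lemma lift_gen (P B C : lmodType R) (g : {linear B -> C}) (f : {linear P -> C}) :
  projective P -> (forall x, exists b, g b = f x) ->
  exists h : {linear P -> B}, forall x, g (h x) = f x.
Proof.
move=> pP Hf.
pose pi := fliftL (X := P) (R := R) (fun x => x).
have spi : surjective pi by move=> y; exists (fdelta R y); rewrite /= flift_delta.
pose idl := mklin (U := P) (V := P) (f := fun x => x) (fun a x y => erefl).
have [s Hs] := pP _ _ pi spi idl.
pose b x := sval (cid (Hf x)).
have Hb x : g (b x) = f x by rewrite /b; case: cid.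
pose L := fliftL (R := R) b.
have Hl : forall a x y, L (s (a *: x + y)) = a *: L (s x) + L (s y).
  by move=> a x y; rewrite !linearP.
exists (mklin Hl).
move=> x /=; rewrite flift_comp.
have -> : (fun i => g (b i)) = (fun i => f i) by apply: funext => i; exact: Hb.
by rewrite -flift_comp; move: (Hs x) => /= ->.
Qed.

End Lift.


Section Lin.
Variable R : comPzRingType.

Definition lcomp (U V W : lmodType R) (f : {linear V -> W}) (g : {linear U -> V}) :
  {linear U -> W} := @mklin R U W (fun x => f (g x)) (fun a x y => etrans (congr1 f (linearP g a x y)) (linearP f a (g x) (g y))).

Definition lid (U : lmodType R) : {linear U -> U} := @mklin R U U (fun x => x) (fun a x y => erefl).

Lemma ldiff_lin (U V : lmodType R) (r : R) (f g : {linear U -> V}) a x y :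
  r *: f (a *: x + y) - g (a *: x + y) = a *: (r *: f x - g x) + (r *: f y - g y).
Proof.
rewrite (linearP f a x y) (linearP g a x y) scalerDr scalerBr !scalerA [r * a]mulrC opprD.
by rewrite addrACA.
Qed.

Definition ldiff (U V : lmodType R) (r : R) (f g : {linear U -> V}) : {linear U -> V} :=
  mklin (ldiff_lin r f g).

Lemma lsum_lin (U V : lmodType R) n (c : 'I_n -> R) (h : 'I_n -> {linear U -> V}) a x y :
  \sum_k c k *: h k (a *: x + y) = a *: (\sum_k c k *: h k x) + \sum_k c k *: h k y.
Proof.
rewrite scaler_sumr -big_split /=; apply: eq_bigr => k _.
by rewrite linearP scalerDr !scalerA mulrC.
Qed.

Definition lsum (U V : lmodType R) n (c : 'I_n -> R) (h : 'I_n -> {linear U -> V}) :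
  {linear U -> V} := mklin (lsum_lin c h).

Lemma comb (M B C : lmodType R) (g : {linear B -> C}) (alpha : {linear M -> C})
  n (d : 'I_n -> R) (h : 'I_n -> {linear M -> B}) :
  (forall k x, g (h k x) = d k *: alpha x) ->
  forall j, in_ideal d j -> exists H : {linear M -> B}, forall x, g (H x) = j *: alpha x.
Proof.
move=> Hh j [c ->]; exists (lsum c h) => x /=.
rewrite linear_sum scaler_suml; apply: eq_bigr => k _.
by rewrite linearZ /= Hh scalerA.
Qed.

Lemma in_ideal_gen n (d : 'I_n -> R) k : in_ideal d (d k).
Proof.
exists (fun i => if i == k then 1 else 0).
rewrite (bigD1 k) //= eqxx mul1r big1 ?addr0 // => i /negbTE ->.
by rewrite mul0r.
Qed.

Section Ker.
Variables (V W : lmodType R) (g : {linear V -> W}).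
Definition kerT := {x : V | g x = 0}.
HB.instance Definition _ := gen_eqMixin kerT.
HB.instance Definition _ := gen_choiceMixin kerT.

Lemma keq (p q : kerT) : sval p = sval q -> p = q.
Proof.
case: p q => [f pf] [h ph] /= E; subst; congr exist; exact: Prop_irrelevance.
Qed.

Lemma k0 : g 0 = 0. Proof. exact: linear0. Qed.
Lemma kD x y : g x = 0 -> g y = 0 -> g (x + y) = 0.
Proof. by move=> a b; rewrite linearD a b addr0. Qed.
Lemma kN x : g x = 0 -> g (- x) = 0.
Proof. by move=> a; rewrite linearN a oppr0. Qed.
Lemma kZ c x : g x = 0 -> g (c *: x) = 0.
Proof. by move=> a; rewrite linearZ /= a scaler0. Qed.

Definition kzero : kerT := exist _ _ k0.
Definition kadd (p q : kerT) : kerT := exist _ _ (kD (proj2_sig p) (proj2_sig q)).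
Definition kopp (p : kerT) : kerT := exist _ _ (kN (proj2_sig p)).
Definition kscale c (p : kerT) : kerT := exist _ _ (kZ c (proj2_sig p)).

Lemma kaddA : associative kadd.
Proof. by move=> p q r; apply: keq => /=; rewrite addrA. Qed.
Lemma kaddC : commutative kadd.
Proof. by move=> p q; apply: keq => /=; rewrite addrC. Qed.
Lemma kadd0 : left_id kzero kadd.
Proof. by move=> p; apply: keq => /=; rewrite add0r. Qed.
Lemma kaddN : left_inverse kzero kopp kadd.
Proof. by move=> p; apply: keq => /=; rewrite addNr. Qed.
HB.instance Definition _ := GRing.isZmodule.Build kerT kaddA kaddC kadd0 kaddN.

Lemma kscaleA a b v : kscale a (kscale b v) = kscale (a * b) v.
Proof. by apply: keq => /=; rewrite scalerA. Qed.
Lemma kscale1 : left_id 1 kscale.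
Proof. by move=> p; apply: keq => /=; rewrite scale1r. Qed.
Lemma kscaleDr : right_distributive kscale +%R.
Proof. by move=> a p q; apply: keq => /=; rewrite scalerDr. Qed.
Lemma kscaleDl v : {morph kscale^~ v: a b / a + b}.
Proof. by move=> a b; apply: keq => /=; rewrite scalerDl. Qed.
HB.instance Definition _ := GRing.Zmodule_isLmodule.Build R kerT kscaleA kscale1 kscaleDr kscaleDl.

Definition kincl : {linear kerT -> V} := @mklin R kerT V (fun p => sval p) (fun a x y => erefl).

Lemma kincl_exact : short_exact kincl g -> True. Proof. by []. Qed.

Lemma ker_short_exact : surjective g -> short_exact kincl g.
Proof.
move=> sg; split; [|split] => //.
  by move=> p q /= E; apply: keq.
move=> y; split => [gy|[x <-]]; last exact: (proj2_sig x).
by exists (exist _ y gy).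
Qed.

End Ker.

Lemma factor_through (F M W : lmodType R) (g : {linear F -> M}) (t : {linear F -> W}) :
  surjective g -> (forall y, g y = 0 -> t y = 0) ->
  exists H : {linear M -> W}, forall y, H (g y) = t y.
Proof.
move=> sg Ht.
pose pre m := sval (cid (sg m)).
have Hpre m : g (pre m) = m by rewrite /pre; case: cid.
have key y m : g y = m -> t y = t (pre m).
  move=> E; apply/eqP; rewrite -subr_eq0 -linearB; apply/eqP/Ht.
  by rewrite linearB E Hpre subrr.
have Hl a x y : t (pre (a *: x + y)) = a *: t (pre x) + t (pre y).
  by rewrite -linearP; symmetry; apply: key; rewrite linearP !Hpre.
exists (mklin Hl) => y /=; symmetry; exact: key.
Qed.

End Lin.


Section Res.
Variable R : comPzRingType.

Definition kerlift (X Y : lmodType R) (f : {linear X -> Y}) : {linear fmod R X -> X} :=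
  fliftL (fun x => if f x == 0 then x else 0).

Lemma flift_zero (X : eqType) (V : lmodType R) (p : fmod R X) :
  flift (fun _ => (0 : V)) p = 0.
Proof. by rewrite /flift big1 // => i _; rewrite scaler0. Qed.

Lemma kerlift_ex (X Y : lmodType R) (f : {linear X -> Y}) y :
  f y = 0 <-> exists p, kerlift f p = y.
Proof.
split => [fy|[p <-]].
  by exists (fdelta R y); rewrite /= flift_delta fy eqxx.
rewrite /= flift_comp (_ : (fun i => _) = fun _ => 0) ?flift_zero //.
apply: funext => i; case: eqP => [//|_] /=; exact: linear0.
Qed.

Record tri := Tri { tX : lmodType R; tY : lmodType R; tf : {linear tX -> tY} }.

Definition tstep (t : tri) : tri := @Tri (fmod R (tX t)) (tX t) (kerlift (tf t)).

Section Build.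
Variables (F M : lmodType R) (e : {linear F -> M}).
Hypotheses (pF : projective F) (se : surjective e).

Definition t0 : tri := @Tri (fmod R F) F (kerlift e).
Definition tseq (i : nat) : tri := iter i tstep t0.
Definition rmod (i : nat) : lmodType R :=
  match i with 0 => F | S i => tX (tseq i) end.
Definition rd (i : nat) : {linear rmod i.+1 -> rmod i} :=
  match i return {linear rmod i.+1 -> rmod i} with
  | 0 => tf t0
  | S i => tf (tseq i.+1)
  end.

Lemma rdS i : rd i.+1 = kerlift (rd i) :> (_ -> _).
Proof. by case: i. Qed.

Lemma rproj i : projective (rmod i).
Proof. case: i => [|[|i]] //; exact: free_proj. Qed.

Lemma rexact i y : rd i y = 0 <-> exists x, rd i.+1 x = y.
Proof. by rewrite rdS kerlift_ex. Qed.

Definition theres : proj_resolution M :=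
  @ProjResolution R M rmod rd e rproj se (fun y => kerlift_ex e y) rexact.

End Build.
End Res.


Section Main.
Variables (R : comPzRingType) (M : lmodType R).

Definition C1 := w_split_module M.
Definition C2 := (forall N : lmodType R, Ext_GV_torsion 0 M N).
Definition C3 := (forall (N : lmodType R) (j : nat), Ext_GV_torsion j M N).
Definition C4 := (forall (B C : lmodType R) (g : {linear B -> C}),
                surjective g -> coker_postcomp_GV_torsion M g).
Definition C5 := (forall (F : lmodType R) (g' : {linear F -> M}),
                projective F -> surjective g' ->
                coker_postcomp_GV_torsion M g').
Definition C6 := (forall (B C : lmodType R) (g : {linear B -> C}),
                surjective g -> forall alpha : {linear M -> C},
                exists (n : nat) (d : 'I_n -> R)
                       (h : 'I_n -> {linear M -> B}),
                  is_GV d /\ forall k x, g (h k x) = d k *: alpha x).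
Definition C7 := (forall (A B : lmodType R) (f : {linear A -> B})
                (g : {linear B -> M}), short_exact f g -> w_split_seq g).
Definition C8 := (exists (I : eqType) (xs : I -> M) (n : nat) (d : 'I_n -> R),
                is_GV d /\
                exists fs : 'I_n -> I -> {linear M -> R^o},
                  forall (k : 'I_n) (x : M),
                    exists s : seq I, uniq s /\
                      (forall i, i \notin s -> fs k i x = 0) /\
                      d k *: x = \sum_(i <- s) fs k i x *: xs i).

Definition Fac := exists (Q : lmodType R) (g0 : {linear Q -> M}) (n : nat)
  (d : 'I_n -> R) (h : 'I_n -> {linear M -> Q}),
  projective Q /\ is_GV d /\ forall k x, g0 (h k x) = d k *: x.

Lemma C1_Fac : C1 -> Fac.
Proof.
move=> [K [P [f [g [pP [_ [n [d [h [gv Hh]]]]]]]]]].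
by exists P, g, n, d, h.
Qed.

Lemma Fac_C6 : Fac -> C6.
Proof.
move=> [Q [g0 [n [d [h [pQ [gv Hh]]]]]]] B C g sg alpha.
have [u Hu] := pQ _ _ g sg (lcomp alpha g0).
exists n, d, (fun k => lcomp u (h k)); split => // k x /=.
by rewrite Hu /= Hh linearZ.
Qed.

Lemma C6_C4 : C6 -> C4.
Proof.
move=> H6 B C g sg alpha.
have [n [d [h [gv Hh]]]] := H6 B C g sg alpha.
exists n, d; split => //; exact: comb Hh.
Qed.

Lemma C6_C7 : C6 -> C7.
Proof.
move=> H6 A B f g [_ [sg _]].
have [n [d [h [gv Hh]]]] := H6 B M g sg (lid M).
by exists n, d, h.
Qed.

Definition piM := fliftL (R := R) (X := M) (fun x : M => x).
Lemma piM_surj : surjective piM.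
Proof. by move=> y; exists (fdelta R y); rewrite /= flift_delta. Qed.

Lemma C7_C1 : C7 -> C1.
Proof.
move=> H7.
have ses := ker_short_exact piM_surj.
exists (kerT piM), (fmod R M), (kincl piM), piM; split; first exact: free_proj.
split => //; exact: H7 ses.
Qed.

Lemma C5_C1 : C5 -> C1.
Proof.
move=> H5.
have ses := ker_short_exact piM_surj.
exists (kerT piM), (fmod R M), (kincl piM), piM; split; first exact: free_proj.
split => //.
have [n [d [gv Hd]]] := H5 _ piM (@free_proj R M) piM_surj (lid M).
pose hk k := sval (cid (Hd _ (in_ideal_gen d k))).
exists n, d, hk; split => // k x; rewrite /hk; case: cid => h /= ->; done.
Qed.

Lemma C6_C8 : C6 -> C8.
Proof.
move=> H6.
have [n [d [h [gv Hh]]]] := H6 _ _ piM piM_surj (lid M).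
exists M, (fun x => x), n, d; split => //.
have Hl k i a x y : sval (h k (a *: x + y)) i = a * sval (h k x) i + sval (h k y) i.
  by rewrite linearP.
exists (fun k i => @mklin R M R^o (fun x => sval (h k x) i) (Hl k i)).
move=> k x; exists (supp (h k x)); split; first exact: supp_uniq.
split.
  by move=> i; rewrite mem_supp => /negPn/eqP.
by rewrite -[RHS]/(flift (fun x => x) (h k x)) -[RHS]/(piM (h k x)) Hh.
Qed.

Lemma C8_Fac : C8 -> Fac.
Proof.
move=> [I [xs [n [d [gv [fs Hfs]]]]]].
pose g0 := fliftL (R := R) (X := I) xs.
have Hsupp k x : fsupp (fun i => (fs k i x : R)).
  by have [s [_ [Hs _]]] := Hfs k x; exists s.
pose hf k x : fmod R I := exist _ _ (Hsupp k x).
have Hl k a x y : hf k (a *: x + y) = a *: hf k x + hf k y.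
  by apply: feq => i /=; rewrite linearP.
exists (fmod R I), g0, n, d, (fun k => mklin (Hl k)); split; first exact: free_proj.
split => // k x /=.
have [s [us [Hs ->]]] := Hfs k x.
rewrite (flift_over (p := hf k x) xs us) // => i; apply: contraR => /Hs E.
by rewrite /= E eqxx.
Qed.

End Main.


Section Hom.
Variables (R : comPzRingType) (M : lmodType R).

Lemma dd0 (P : proj_resolution M) i z : pr_d P i (pr_d P i.+1 z) = 0.
Proof. by apply (pr_exact _).2; exists z. Qed.

Lemma ed0 (P : proj_resolution M) z : pr_e P (pr_d P 0 z) = 0.
Proof. by apply (pr_exact0 _).2; exists z. Qed.

Section K.
Variables (Q : lmodType R) (g0 : {linear Q -> M}) (pQ : projective Q)
  (r : R) (H : {linear M -> Q}) (HH : forall x, g0 (H x) = r *: x)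
  (P : proj_resolution M).

Definition Inv i (s : {linear pr_mod P i -> pr_mod P i.+1}) :=
  forall z, pr_d P i (s (pr_d P i z)) = r *: pr_d P i z.

Lemma step i s : Inv s -> exists s' : {linear pr_mod P i.+1 -> pr_mod P i.+2},
  forall x, pr_d P i.+1 (s' x) = r *: x - s (pr_d P i x).
Proof.
move=> Is.
pose f := ldiff r (lid _) (lcomp s (pr_d P i)).
have H1 : forall x, exists b, pr_d P i.+1 b = f x.
  move=> x; apply (pr_exact _).1 => /=.
  by rewrite linearB linearZ /= Is subrr.
have [s' Hs'] := lift_gen (@pr_proj _ _ P i.+1) H1.
by exists s'.
Qed.

Lemma step_inv i (s : {linear pr_mod P i -> pr_mod P i.+1}) (s' : {linear pr_mod P i.+1 -> pr_mod P i.+2}) :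
  (forall x, pr_d P i.+1 (s' x) = r *: x - s (pr_d P i x)) -> Inv s'.
Proof. by move=> Hs z; rewrite Hs dd0 linear0 subr0. Qed.

Lemma base : exists s : {linear pr_mod P 0 -> pr_mod P 1}, Inv s.
Proof.
have [u Hu] := pQ (pr_e_surj P) g0.
pose f := ldiff r (lid _) (lcomp u (lcomp H (pr_e P))).
have H1 : forall x, exists b, pr_d P 0 b = f x.
  move=> x; apply (pr_exact0 _).1 => /=.
  by rewrite linearB linearZ /= Hu HH subrr.
have [s Hs] := lift_gen (@pr_proj _ _ P 0) H1.
by exists s => z; rewrite Hs /= ed0 linear0 linear0 subr0.
Qed.

Lemma all_inv i : exists s : {linear pr_mod P i -> pr_mod P i.+1}, Inv s.
Proof.
elim: i => [|i [s Is]]; first exact: base.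
have [s' Hs'] := step Is.
exists s'; exact: step_inv Hs'.
Qed.

Lemma ext_kill (N : lmodType R) j (phi : {linear pr_mod P j.+1 -> N}) :
  (forall x, phi (pr_d P j.+1 x) = 0) ->
  exists psi : {linear pr_mod P j -> N}, forall x, r *: phi x = psi (pr_d P j x).
Proof.
move=> cyc.
have [s Is] := all_inv j.
have [s' Hs'] := step Is.
exists (lcomp phi s) => x /=.
have := cyc (s' x); rewrite Hs' linearB linearZ /= => /eqP; rewrite subr_eq0.
by move/eqP.
Qed.

End K.

Lemma Fac_C3 : Fac M -> C3 M.
Proof.
move=> [Q [g0 [n [d [h [pQ [gv Hh]]]]]]] N j P phi cyc.
exists n, d; split => // r Hr.
have Hh' : forall k x, g0 (h k x) = d k *: lid M x by [].
have [H HH] := comb Hh' Hr.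
have HH' : forall x, g0 (H x) = r *: x by move=> x; rewrite HH.
exact (ext_kill pQ HH' cyc).
Qed.

Lemma C2_C5 : C2 M -> C5 M.
Proof.
move=> H2 F g' pF sg' alpha.
pose P := theres pF sg'.
have Hk : forall x : pr_mod P 1, g' (pr_d P 0 x) = 0 by move=> x; exact: (ed0 x).
pose ph (x : pr_mod P 1) : kerT g' := exist _ (pr_d P 0 x) (Hk x).
have Hl : forall a x y, ph (a *: x + y) = a *: ph x + ph y.
  move=> a x y; apply: keq; rewrite /ph /=; exact: flift_lin.
pose phi : {linear pr_mod P 1 -> kerT g'} := mklin Hl.
have cyc : forall x, phi (pr_d P 1 x) = 0.
  by move=> x; apply: keq; exact: (@dd0 P 0 x).
have [n [d [gv Hd]]] := H2 (kerT g') P phi cyc.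
exists n, d; split => // r Hr.
have [psi Hpsi] := Hd r Hr.
pose t := ldiff r (lid F) (lcomp (kincl g') psi).
have Ht : forall y, g' y = 0 -> t y = 0.
  move=> y /(pr_exact0 (p := P) y) [x <-] /=.
  by rewrite -(Hpsi x) /= subrr.
have [Hm HHm] := factor_through sg' Ht.
exists (lcomp Hm alpha) => x /=.
have [y <-] := sg' (alpha x).
rewrite HHm /= linearB linearZ /= (proj2_sig (psi y)) subr0.
done.
Qed.

End Hom.

Unset Implicit Arguments.
Theorem proposition2p5 (R : comPzRingType) (M : lmodType R) :
  [<->
   (* (1) *) w_split_module M;
   (* (2) *) (forall N : lmodType R, Ext_GV_torsion 0 M N);
   (* (3) *) (forall (N : lmodType R) (j : nat), Ext_GV_torsion j M N);
   (* (4) *) (forall (B C : lmodType R) (g : {linear B -> C}),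
                surjective g -> coker_postcomp_GV_torsion M g);
   (* (5) *) (forall (F : lmodType R) (g' : {linear F -> M}),
                projective F -> surjective g' ->
                coker_postcomp_GV_torsion M g');
   (* (6) *) (forall (B C : lmodType R) (g : {linear B -> C}),
                surjective g -> forall alpha : {linear M -> C},
                exists (n : nat) (d : 'I_n -> R)
                       (h : 'I_n -> {linear M -> B}),
                  is_GV d /\ forall k x, g (h k x) = d k *: alpha x);
   (* (7) *) (forall (A B : lmodType R) (f : {linear A -> B})
                (g : {linear B -> M}), short_exact f g -> w_split_seq g);
   (* (8) *) (exists (I : eqType) (xs : I -> M) (n : nat) (d : 'I_n -> R),
                is_GV d /\
                exists fs : 'I_n -> I -> {linear M -> R^o},
                  forall (k : 'I_n) (x : M),
                    exists s : seq I, uniq s /\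
                      (forall i, i \notin s -> fs k i x = 0) /\
                      d k *: x = \sum_(i <- s) fs k i x *: xs i)].
Proof.
have C15 : C5 M -> C1 M := @C5_C1 R M.
have C1F : C1 M -> Fac M := @C1_Fac R M.
have CF3 : Fac M -> C3 M := @Fac_C3 R M.
have CF6 : Fac M -> C6 M := @Fac_C6 R M.
have C25 : C2 M -> C5 M := @C2_C5 R M.
tfae.
- by move=> H1 N; exact: (CF3 (C1F H1) N 0).
- by move=> H2; exact: CF3 (C1F (C15 (C25 H2))).
- move=> H3; apply: (@C6_C4 R M); apply: CF6; apply: C1F; apply: C15; apply: C25.
  by move=> N; exact: H3 N 0.
- by move=> H4 F g' _ sg'; exact: H4.
- by move=> H5; exact: CF6 (C1F (C15 H5)).
- exact: (@C6_C7 R M).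
- by move=> H7; exact: (@C6_C8 R M) (CF6 (C1F (@C7_C1 R M H7))).
- move=> H8; apply: (@C7_C1 R M); apply: (@C6_C7 R M); apply: CF6.
  exact: (@C8_Fac R M).
Qed.
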